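(* Assume $1-4M_0=0$. For $x\in\Omega_0$ put $A(x):=\partial_x u_0(x)$ and $B(x):=-\tfrac12\partial_x u_0(x)-\tfrac14+2\rho_0(x)$, and for $t\ge0$ $$D(t,x):=8\rho_0(x)-\big(2A(x)+4B(x)\big)e^{-t/2}-2B(x)\,t\,e^{-t/2}$$ (this is the expression of $\partial_x\eta(t,x)$ for a classical solution of the Lagrangian system, as long as it exists). Then there exist $t>0$ and $x\in\Omega_0$ with $D(t,x)\le0$ if and only if there exists $x\in\Omega_0$ such that $$\partial_x u_0(x)<\min\Big\{0,\,4\rho_0(x)-\tfrac12\Big\}$$ and $$\ln\left(\frac{8\rho_0(x)}{8\rho_0(x)-2\partial_x u_0(x)-1}\right)\le\frac{2\partial_x u_0(x)}{8\rho_0(x)-2\partial_x u_0(x)-1}.$$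
   Context: $\Omega_0=(a_0,b_0)$ is a bounded open interval, $\rho_0\in H^2(\Omega_0)$ with $\rho_0>0$ on $\Omega_0$, $u_0\in H^3(\Omega_0)$ (both continuous up to the boundary), and $M_0:=\int_{\Omega_0}\rho_0(x)\,dx>0$. Note $D(0,x)=1$ for all $x$. *)

(* Defs.v *)
From Stdlib Require Import Reals Lra.
Open Scope R_scope.

Definition Acoef (du0 : R -> R) (x : R) : R := du0 x.
Definition Bcoef (rho0 du0 : R -> R) (x : R) : R := - (1/2) * du0 x - 1/4 + 2 * rho0 x.

Definition Dfun (rho0 du0 : R -> R) (t x : R) : R :=
  8 * rho0 x - (2 * Acoef du0 x + 4 * Bcoef rho0 du0 x) * exp (- t / 2)
  - 2 * Bcoef rho0 du0 x * t * exp (- t / 2).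

(* Main.v *)
Require Import Defs.
From Stdlib Require Import Reals Lra.
Open Scope R_scope.

Lemma exp_ge1 y : 1 + y <= exp y.
Proof. apply exp_ineq1_le. Qed.

Lemma ln_div x y : 0 < x -> 0 < y -> ln (x / y) = ln x - ln y.
Proof. intros. unfold Rdiv. rewrite ln_mult, ln_Rinv; try ring; try assumption. apply Rinv_0_lt_compat; assumption. Qed.

Lemma Dfun_eq rho0 du0 t x : Dfun rho0 du0 t x = exp(-t/2) *
  (8*rho0 x * exp(t/2) - (8*rho0 x - 1) - (8*rho0 x - 2*du0 x - 1)*(t/2)).
Proof.
  unfold Dfun, Acoef, Bcoef.
  assert (H : exp(-t/2)*exp(t/2)=1).
  { rewrite <- exp_plus. replace (-t/2 + t/2) with 0 by field. apply exp_0. }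
  replace (exp(-t/2) * (8*rho0 x * exp(t/2) - (8*rho0 x - 1) - (8*rho0 x - 2*du0 x - 1)*(t/2)))
    with (8*rho0 x*(exp(-t/2)*exp(t/2)) - exp(-t/2)*((8*rho0 x - 1) + (8*rho0 x - 2*du0 x - 1)*(t/2))) by ring.
  rewrite H. field.
Qed.

Lemma key c a : 0 < c ->
  ((exists s, 0<s /\ c*exp s - (c-1) - (c-2*a-1)*s <= 0) <->
   (a<0 /\ 0 < c-2*a-1 /\ ln(c/(c-2*a-1)) <= 2*a/(c-2*a-1))).
Proof.
  intros Hc. set (k := c-2*a-1). split.
  - intros [s [Hs Hf]].
    assert (Hkc : c < k).
    { destruct (Rlt_or_le c k) as [h|h]; [exact h|].
      pose proof (exp_ge1 s).
      assert (c*(1+s) <= c*exp s) by (apply Rmult_le_compat_l; lra).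
      assert (0 <= (c-k)*s) by (apply Rmult_le_pos; lra).
      lra. }
    assert (Hk : 0 < k) by lra.
    split; [unfold k in Hkc; lra|]. split; [exact Hk|].
    rewrite ln_div by lra.
    set (L := ln c - ln k).
    assert (Hes : c*exp s = k * exp (s + L)).
    { unfold L. rewrite exp_plus.
      replace (ln c - ln k) with (ln c + - ln k) by ring.
      rewrite exp_plus, exp_Ropp, !exp_ln by lra. field. lra. }
    pose proof (exp_ge1 (s+L)).
    assert (k*(1+(s+L)) <= k*exp(s+L)) by (apply Rmult_le_compat_l; lra).
    assert (k*L <= 2*a) by (unfold k in *; lra).
    apply (Rmult_le_reg_l k); [exact Hk|].
    replace (k * (2*a/k)) with (2*a) by (field; lra). exact H1.
  - intros [Ha [Hk Hl]].
    rewrite ln_div in Hl by lra.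
    assert (HL : k*(ln c - ln k) <= 2*a).
    { apply (Rmult_le_compat_l k) in Hl; [|lra].
      replace (k * (2*a/k)) with (2*a) in Hl by (field; lra). exact Hl. }
    assert (Hneg : ln c - ln k < 0).
    { destruct (Rlt_or_le (ln c - ln k) 0) as [h|h]; [exact h|].
      assert (0 <= k*(ln c - ln k)) by (apply Rmult_le_pos; lra). lra. }
    assert (Hck : c < k) by (apply ln_lt_inv; lra).
    exists (ln k - ln c). split; [lra|].
    replace (ln k - ln c) with (ln k + - ln c) by ring.
    rewrite exp_plus, exp_Ropp, !exp_ln by lra.
    replace (c * (k * / c)) with k by (field; lra).
    unfold k in *. lra.
Qed.

Theorem proposition3p2
  (a0 b0 : R) (rho0 u0 du0 : R -> R)
  (Hab : a0 < b0)
  (Hrho_cont : forall x, a0 <= x <= b0 -> continuity_pt rho0 x)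
  (Hu_cont : forall x, a0 <= x <= b0 -> continuity_pt u0 x)
  (Hdu : forall x, a0 < x < b0 -> derivable_pt_lim u0 x (du0 x))
  (Hdu_cont : forall x, a0 < x < b0 -> continuity_pt du0 x)
  (Hrho_pos : forall x, a0 < x < b0 -> 0 < rho0 x)
  (pr : Riemann_integrable rho0 a0 b0)
  (HM0pos : 0 < RiemannInt pr)
  (HM0 : 1 - 4 * RiemannInt pr = 0) :
  (exists t x, 0 < t /\ a0 < x < b0 /\ Dfun rho0 du0 t x <= 0) <->
  (exists x, a0 < x < b0 /\
     du0 x < Rmin 0 (4 * rho0 x - 1/2) /\
     ln (8 * rho0 x / (8 * rho0 x - 2 * du0 x - 1))
       <= 2 * du0 x / (8 * rho0 x - 2 * du0 x - 1)).
Proof.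
  split.
  - intros [t [x [Ht [Hx HD]]]].
    pose proof (Hrho_pos x Hx) as Hr.
    rewrite Dfun_eq in HD.
    pose proof (exp_pos (-t/2)) as He.
    assert (Hf : 8*rho0 x * exp(t/2) - (8*rho0 x - 1) - (8*rho0 x - 2*du0 x - 1)*(t/2) <= 0).
    { destruct (Rle_or_lt (8*rho0 x * exp(t/2) - (8*rho0 x - 1) - (8*rho0 x - 2*du0 x - 1)*(t/2)) 0) as [h|h]; [exact h|].
      pose proof (Rmult_lt_0_compat _ _ He h). lra. }
    destruct (proj1 (key (8*rho0 x) (du0 x) ltac:(lra))) as [Ha [Hk Hl]].
    { exists (t/2). split; [lra|exact Hf]. }
    exists x. split; [exact Hx|]. split; [|exact Hl].
    apply Rmin_glb_lt; lra.
  - intros [x [Hx [Hm Hl]]].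
    pose proof (Hrho_pos x Hx) as Hr.
    pose proof (Rlt_le_trans _ _ _ Hm (Rmin_l _ _)).
    pose proof (Rlt_le_trans _ _ _ Hm (Rmin_r _ _)).
    destruct (proj2 (key (8*rho0 x) (du0 x) ltac:(lra))) as [s [Hs Hf]].
    { split; [lra|]. split; [lra|exact Hl]. }
    exists (2*s), x. split; [lra|]. split; [exact Hx|].
    rewrite Dfun_eq.
    replace (2*s/2) with s by field.
    pose proof (exp_pos (-(2*s)/2)).
    assert (0 <= exp (-(2*s)/2) * -(8*rho0 x * exp s - (8*rho0 x - 1) - (8*rho0 x - 2*du0 x - 1)*s))
      by (apply Rmult_le_pos; lra).
    lra.
Qed.
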